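(* Let $\Lambda=\mathrm{diag}(\lambda_1,\dots,\lambda_n)$ with $\lambda_1<\dots<\lambda_n$ and let $f:\mathbb{R}\to\mathbb{R}$ satisfy $f(\lambda_i)\neq 0$ for all $i$ and $|f(\lambda_i)|\neq|f(\lambda_j)|$ for $i\neq j$. Let $F:\mathcal{T}_\Lambda\to\mathcal{T}_\Lambda$ be the QR step induced by $f$. Let $\mathcal{K}\subset\mathcal{T}_\Lambda$ be a compact set containing no diagonal matrices. Then there exists $K>0$ such that for all $T\in\mathcal{T}_\Lambda$, $$\#\{k\in\mathbb{N} : F^k(T)\in\mathcal{K}\}<K.$$
   Context: $\mathcal{T}_\Lambda$ denotes the set of real symmetric tridiagonal $n\times n$ matrices with spectrum $\{\lambda_1,\dots,\lambda_n\}$. For an invertible real matrix $A$, write uniquely $A=\mathbf{Q}(A)\mathbf{R}(A)$ with $\mathbf{Q}(A)$ orthogonal and $\mathbf{R}(A)$ upper triangular with positive diagonal. The QR step induced by $f$ is $F(T)=\mathbf{Q}(f(T))^{*}\,T\,\mathbf{Q}(f(T))$, where $f(T)$ is defined by functional calculus. *)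

(* Defs.v *)
From HB Require Import structures.
From mathcomp Require Import all_boot all_order all_algebra.
From mathcomp Require Import all_classical all_reals all_analysis.
From Stdlib Require Import ClassicalEpsilon.
Set Implicit Arguments. Unset Strict Implicit. Unset Printing Implicit Defensive.
Import Order.TTheory GRing.Theory Num.Theory.
Import numFieldNormedType.Exports.
Local Open Scope ring_scope.

Section Defs.
Variables (R : realType) (n : nat).

Definition symmetric_mx (A : 'M[R]_n) : Prop := A^T = A.

Definition tridiagonal_mx (A : 'M[R]_n) : Prop :=
  forall i j : 'I_n, ((i.+1 < j)%N \/ (j.+1 < i)%N) -> A i j = 0.

Definition orthogonal_mx (Q : 'M[R]_n) : Prop := Q^T *m Q = 1%:M.

Definition upper_pos_mx (Rm : 'M[R]_n) : Prop :=
  (forall i j : 'I_n, (j < i)%N -> Rm i j = 0) /\ (forall i : 'I_n, 0 < Rm i i).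

Definition TLambda (lam : 'I_n -> R) : set 'M[R]_n :=
  [set A | symmetric_mx A /\ tridiagonal_mx A /\
           (forall a : R, eigenvalue A a <-> exists i : 'I_n, a = lam i)].

(* functional calculus for real symmetric matrices:
   if A = Q^T diag(d) Q with Q orthogonal, then f(A) = Q^T diag(f d) Q.
   (Independent of the chosen diagonalization.) *)
Definition orth_diag (A : 'M[R]_n) (p : 'M[R]_n * 'rV[R]_n) : Prop :=
  orthogonal_mx p.1 /\ A = p.1^T *m diag_mx p.2 *m p.1.

Definition funcalc (f : R -> R) (A : 'M[R]_n) : 'M[R]_n :=
  let p := epsilon (inhabits (1%:M, 0)) (orth_diag A) in
  p.1^T *m diag_mx (map_mx f p.2) *m p.1.

(* Q factor of the QR decomposition A = Q R with Q orthogonal, R upper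
   triangular with positive diagonal (unique for invertible A). *)
Definition qrQ (A : 'M[R]_n) : 'M[R]_n :=
  epsilon (inhabits 1%:M)
    (fun Q => orthogonal_mx Q /\ exists Rm, upper_pos_mx Rm /\ A = Q *m Rm).

Definition QRstep (f : R -> R) (T : 'M[R]_n) : 'M[R]_n :=
  let Q := qrQ (funcalc f T) in Q^T *m T *m Q.

End Defs.

(* Main.v *)
Require Import Defs.
From HB Require Import structures.
From mathcomp Require Import all_boot all_order all_algebra.
From mathcomp Require Import all_classical all_reals all_analysis.
From mathcomp Require Import ring lra.
From Stdlib Require Import ClassicalEpsilon.
Set Implicit Arguments. Unset Strict Implicit. Unset Printing Implicit Defensive.
Import Order.TTheory GRing.Theory Num.Theory.
Import numFieldNormedType.Exports.
Local Open Scope ring_scope.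

Section Dot.
Variables (R : realType) (n : nat).
Implicit Types u v w : 'rV[R]_n.

Definition dot u v : R := (u *m v^T) 0 0.

Lemma dotE u v : dot u v = \sum_i u 0 i * v 0 i.
Proof. by rewrite /dot mxE; apply: eq_bigr => i _; rewrite mxE. Qed.

Lemma dotC u v : dot u v = dot v u.
Proof. by rewrite !dotE; apply: eq_bigr => i _; rewrite mulrC. Qed.

Lemma dotDl u v w : dot (u + v) w = dot u w + dot v w.
Proof. by rewrite !dotE -big_split; apply: eq_bigr => i _; rewrite mxE mulrDl. Qed.

Lemma dotNl u w : dot (- u) w = - dot u w.
Proof. by rewrite !dotE -sumrN; apply: eq_bigr => i _; rewrite mxE mulNr. Qed.

Lemma dotBl u v w : dot (u - v) w = dot u w - dot v w.
Proof. by rewrite dotDl dotNl. Qed.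

Lemma dotZl a u w : dot (a *: u) w = a * dot u w.
Proof. by rewrite !dotE mulr_sumr; apply: eq_bigr => i _; rewrite mxE mulrA. Qed.

Lemma dot_suml (I : finType) (P : pred I) (F : I -> 'rV[R]_n) w :
  dot (\sum_(i | P i) F i) w = \sum_(i | P i) dot (F i) w.
Proof.
rewrite dotE; under eq_bigr do rewrite summxE mulr_suml.
rewrite exchange_big; apply: eq_bigr => i _; by rewrite dotE.
Qed.

Lemma dotDr u v w : dot w (u + v) = dot w u + dot w v.
Proof. by rewrite dotC dotDl !(dotC w). Qed.
Lemma dotBr u v w : dot w (u - v) = dot w u - dot w v.
Proof. by rewrite dotC dotBl !(dotC w). Qed.
Lemma dotZr a u w : dot w (a *: u) = a * dot w u.
Proof. by rewrite dotC dotZl dotC. Qed.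
Lemma dot_sumr (I : finType) (P : pred I) (F : I -> 'rV[R]_n) w :
  dot w (\sum_(i | P i) F i) = \sum_(i | P i) dot w (F i).
Proof. by rewrite dotC dot_suml; apply: eq_bigr => i _; rewrite dotC. Qed.

Lemma dot_ge0 u : 0 <= dot u u.
Proof. by rewrite dotE sumr_ge0 // => i _; rewrite -expr2 sqr_ge0. Qed.

Lemma dot_eq0 u : (dot u u == 0) = (u == 0).
Proof.
apply/idP/eqP => [|->]; last by rewrite dotE big1 // => i _; rewrite mxE mul0r.
rewrite dotE psumr_eq0 => [/allP H|i _]; last by rewrite -expr2 sqr_ge0.
apply/rowP => i; rewrite mxE; have := H i (mem_index_enum _).
by rewrite /= mulf_eq0 orbb => /eqP.
Qed.

Lemma dot_gt0 u : u != 0 -> 0 < dot u u.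
Proof. by move=> u0; rewrite lt_def dot_eq0 u0 dot_ge0. Qed.

Lemma mulmx_tr_dot m (A B : 'M[R]_(m, n)) i j :
  (A *m B^T) i j = dot (row i A) (row j B).
Proof. by rewrite dotE mxE; apply: eq_bigr => k _; rewrite !mxE. Qed.

End Dot.

Lemma big_split_last (V : nmodType) n k (ki : 'I_n) (F : 'I_n -> V) :
  nat_of_ord ki = k ->
  \sum_(i < n | (i < k.+1)%N) F i = F ki + \sum_(i < n | (i < k)%N) F i.
Proof.
move=> e; rewrite (bigD1 ki) /= ?e ?ltnS //; congr (_ + _); apply: eq_bigl => i.
by rewrite ltnS -e ltn_neqAle andbC val_eqE.
Qed.

Lemma ltkS n k (ki : 'I_n) (i : 'I_n) : nat_of_ord ki = k ->
  (i < k.+1)%N -> i = ki \/ (i < k)%N.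
Proof.
move=> e; rewrite ltnS leq_eqVlt => /orP[/eqP ik|ik]; last by right.
by left; apply: val_inj; rewrite /= ik e.
Qed.

Section QRexist.
Variables (R : realType) (n : nat) (B : 'M[R]_n).
Hypothesis Bu : B \in unitmx.

Definition Inv k (U L : 'M[R]_n) :=
  [/\ forall i j : 'I_n, (i < k)%N -> (j < k)%N -> dot (row i U) (row j U) = (i == j)%:R,
      forall i j : 'I_n, (i < k)%N -> (j < i)%N -> dot (row i U) (row j B) = 0,
      forall i : 'I_n, (i < k)%N -> 0 < dot (row i U) (row i B),
      forall j : 'I_n, (j < k)%N ->
        row j B = \sum_(i < n | (i < k)%N) dot (row i U) (row j B) *: row i U &
      (forall i : 'I_n, (i < k)%N -> row i U = row i L *m B) /\
      (forall i j : 'I_n, (i < k)%N -> (i < j)%N -> L i j = 0)].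

Lemma inv_step k (U L : 'M[R]_n) : (k < n)%N -> Inv k U L -> exists U' L', Inv k.+1 U' L'.
Proof.
move=> kn; rewrite /Inv; case=> Ha Hb Hc Hd [He Hf].
pose ki := Ordinal kn.
have eki : nat_of_ord ki = k by [].
have neqk : forall j : 'I_n, (j < k)%N -> (j == ki) = false.
  by move=> j jk; apply/negbTE; rewrite -val_eqE /= neq_ltn jk.
pose c i := dot (row i U) (row ki B).
pose x : 'rV_n := 'e_ki - \sum_(i < n | (i < k)%N) c i *: row i L.
pose w := row ki B - \sum_(i < n | (i < k)%N) c i *: row i U.
have wE : w = x *m B.
  rewrite /w /x mulmxBl -rowE mulmx_suml; congr (_ - _); apply: eq_bigr => i ik.
  by rewrite -scalemxAl He.
have x0 : x != 0.
  apply/negP => /eqP /rowP /(_ ki); rewrite !mxE summxE big1 => [|i ik].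
    by rewrite !eqxx /= subr0 => /eqP; rewrite oner_eq0.
  by rewrite !mxE Hf // mulr0.
have w0 : w != 0.
  rewrite wE; apply: contra x0 => /eqP xB0; apply/eqP.
  by rewrite -[x](mulmxK Bu) xB0 mul0mx.
have dw0 : dot w w != 0 by rewrite gt_eqF // dot_gt0.
have wU : forall i : 'I_n, (i < k)%N -> dot w (row i U) = 0.
  move=> i ik; rewrite /w dotBl dot_suml (bigD1 i) //= dotZl Ha // eqxx mulr1.
  rewrite big1 => [|l /andP[lk li]]; last by rewrite dotZl Ha // (negbTE li) mulr0.
  by rewrite addr0 dotC subrr.
have wB : forall j : 'I_n, (j < k)%N -> dot w (row j B) = 0.
  move=> j jk; rewrite (Hd j jk) dot_sumr big1 // => i ik.
  by rewrite dotZr wU ?mulr0.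
have wBk : dot w (row ki B) = dot w w.
  have -> : row ki B = w + \sum_(i < n | (i < k)%N) c i *: row i U by rewrite /w subrK.
  rewrite dotDr dot_sumr big1 ?addr0 // => i ik; by rewrite dotZr wU ?mulr0.
pose nw := Num.sqrt (dot w w).
have nw0 : 0 < nw by rewrite sqrtr_gt0 dot_gt0.
have nw2 : nw * nw = dot w w by rewrite -expr2 sqr_sqrtr // dot_ge0.
have nwn0 : nw != 0 by rewrite gt_eqF.
pose u := nw^-1 *: w.
pose U' := \matrix_(i, j) if i == ki then u 0 j else U i j.
pose L' := \matrix_(i, j) if i == ki then (nw^-1 *: x) 0 j else L i j.
have rU' : forall i, row i U' = if i == ki then u else row i U.
  by move=> i; apply/rowP => j; rewrite !mxE; case: eqP => _; rewrite ?mxE.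
have rL' : forall i, row i L' = if i == ki then nw^-1 *: x else row i L.
  by move=> i; apply/rowP => j; rewrite !mxE; case: eqP => _; rewrite ?mxE.
have uu : dot u u = 1.
  by rewrite dotZl dotZr mulrA -nw2; field.
have uU : forall j : 'I_n, (j < k)%N -> dot u (row j U) = 0.
  by move=> j jk; rewrite dotZl wU ?mulr0.
have uB : forall j : 'I_n, (j < k)%N -> dot u (row j B) = 0.
  by move=> j jk; rewrite dotZl wB ?mulr0.
exists U', L'; split; [| | | |split].
- move=> i j /(ltkS eki)[->|ik] /(ltkS eki)[->|jk].
  + by rewrite rU' eqxx uu.
  + by rewrite !rU' eqxx neqk // uU // eq_sym neqk.
  + by rewrite !rU' eqxx neqk // dotC uU // neqk.
  + by rewrite !rU' !neqk // Ha.
- move=> i j /(ltkS eki)[->|ik] ji.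
  + by rewrite rU' eqxx uB.
  + by rewrite rU' neqk // Hb.
- move=> i /(ltkS eki)[->|ik].
  + by rewrite rU' eqxx dotZl wBk mulr_gt0 ?invr_gt0 // dot_gt0.
  + by rewrite rU' neqk // Hc.
- move=> j jk1; rewrite (big_split_last _ eki) rU' eqxx.
  rewrite (eq_bigr (fun i => dot (row i U) (row j B) *: row i U)); last first.
    by move=> i ik; rewrite rU' neqk.
  case: (ltkS eki jk1) => [->|jk].
  + rewrite dotZl wBk /u scalerA.
    have -> : nw^-1 * dot w w * nw^-1 = 1 by rewrite -nw2; field.
    by rewrite scale1r /w subrK.
  + by rewrite uB // scale0r add0r; apply: Hd.
- move=> i /(ltkS eki)[->|ik].
  + by rewrite rU' rL' eqxx -scalemxAl -wE.
  + by rewrite rU' rL' neqk // He.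
- move=> i j /(ltkS eki)[->|ik] ij.
  + have ejk : (ki == j) = false by apply/negbTE; rewrite -val_eqE /= neq_ltn ij.
    rewrite mxE eqxx [in X in X = _]mxE [in X in X = _]mxE !mxE summxE big1 => [|l lk].
      by rewrite eq_sym ejk /= subr0 mulr0.
    by rewrite !mxE Hf ?mulr0 // (ltn_trans lk).
  + by rewrite !mxE neqk // Hf.
Qed.

Lemma qr_ind k : (k <= n)%N -> exists U L, Inv k U L.
Proof.
elim: k => [|k IH] kn.
  by exists 0, 0; split; [| | | |split] => [i j|i j|i|j|i|i j]; rewrite ltn0.
have [U [L H]] := IH (ltnW kn).
exact: inv_step kn H.
Qed.

End QRexist.

Lemma qr_exists (R : realType) n (A : 'M[R]_n) : A \in unitmx ->
  exists Q, orthogonal_mx Q /\ exists Rm, upper_pos_mx Rm /\ A = Q *m Rm.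
Proof.
move=> Au; have Bu : A^T \in unitmx by rewrite unitmx_tr.
have [U [L [Ha Hb Hc _ _]]] := qr_ind Bu (leqnn n).
have UUt : U *m U^T = 1%:M.
  by apply/matrixP => i j; rewrite mulmx_tr_dot Ha // mxE.
exists U^T; split; first by rewrite /orthogonal_mx trmxK.
exists (U *m A); split; last by rewrite mulmxA (mulmx1C UUt) mul1mx.
rewrite -[A in U *m A]trmxK; split.
  by move=> i j ji; rewrite mulmx_tr_dot Hb.
by move=> i; rewrite mulmx_tr_dot Hc.
Qed.

Section Spec.
Variables (R : realType) (n : nat).
Implicit Types (A P Q : 'M[R]_n).

Definition orth2 Q := Q^T *m Q = 1%:M /\ Q *m Q^T = 1%:M.

Lemma orth2P Q : orthogonal_mx Q -> orth2 Q.
Proof. by move=> H; split => //; apply: mulmx1C. Qed.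

Lemma orth2_tr Q : orth2 Q -> orth2 Q^T.
Proof. by case=> H1 H2; split; rewrite trmxK. Qed.

Lemma eig_sym_orth A x y a b : A^T = A -> x *m A = a *: x -> y *m A = b *: y ->
  a != b -> dot x y = 0.
Proof.
move=> sA hx hy ab.
have : dot (x *m A) y = dot x (y *m A).
  by rewrite /dot trmx_mul sA mulmxA.
rewrite hx hy dotZl dotZr => /eqP; rewrite -subr_eq0 -mulrBl mulf_eq0 subr_eq0.
by rewrite (negbTE ab) => /eqP.
Qed.

Lemma eig_conj Q A a : orth2 Q ->
  eigenvalue (Q^T *m A *m Q) a <-> eigenvalue A a.
Proof.
move=> [H1 H2]; split => /eigenvalueP [v hv v0]; apply/eigenvalueP.
- exists (v *m Q^T).
    by rewrite scalemxAl -hv -!mulmxA H2 mulmx1.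
  apply: contra v0 => /eqP h; by rewrite -[v]mulmx1 -H1 mulmxA h mul0mx.
- exists (v *m Q).
    by rewrite scalemxAl -hv -!mulmxA (mulmxA Q) H2 mul1mx.
  apply: contra v0 => /eqP h; by rewrite -[v]mulmx1 -H2 mulmxA h mul0mx.
Qed.

Lemma od_eig A P d : orth_diag A (P, d) -> forall j, eigenvalue A (d 0 j).
Proof.
move=> [/orth2P [H1 H2] /= ->] j; apply/eigenvalueP; exists (row j P).
  by rewrite -row_mul !mulmxA H2 mul1mx row_mul row_diag_mx -scalemxAl -rowE.
apply/negP => /eqP r0.
have : (P *m P^T) j j = 1 by rewrite H2 mxE eqxx.
rewrite mulmx_tr_dot r0 dotE big1 => [/esym/eqP|i _]; first by rewrite oner_eq0.
by rewrite mxE mul0r.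
Qed.

Variable lam : 'I_n -> R.
Hypothesis lam_inj : injective lam.

Definition inS A := symmetric_mx A /\ (forall a, eigenvalue A a <-> exists i, a = lam i).

Lemma inS_conj Q A : orth2 Q -> inS A -> inS (Q^T *m A *m Q).
Proof.
move=> oQ [sA eA]; split.
  by rewrite /symmetric_mx !trmx_mul trmxK sA mulmxA.
by move=> a; rewrite eig_conj.
Qed.

Lemma spec_exists A : inS A -> exists p, orth_diag A p.
Proof.
move=> [sA eA].
have : forall i, exists v : 'rV[R]_n, v *m A = lam i *: v /\ v != 0.
  move=> i; have /eigenvalueP[v hv v0] : eigenvalue A (lam i) by apply/eA; exists i.
  by exists v.
move=> /fin_all_exists [v hv].
pose u i := (Num.sqrt (dot (v i) (v i)))^-1 *: v i.
have hu i : u i *m A = lam i *: u i.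
  by rewrite -scalemxAl (hv i).1 !scalerA mulrC.
have uu i : dot (u i) (u i) = 1.
  have d0 : dot (v i) (v i) != 0 by rewrite dot_eq0 (hv i).2.
  have s0 : Num.sqrt (dot (v i) (v i)) != 0 by rewrite sqrtr_eq0 -ltNge lt_def d0 dot_ge0.
  rewrite dotZl dotZr mulrA -invfM -expr2 sqr_sqrtr ?dot_ge0 // mulVf //.
have uij i j : i != j -> dot (u i) (u j) = 0.
  move=> ij; rewrite dotZl dotZr (eig_sym_orth sA (hv i).1 (hv j).1) ?mulr0 //.
  by rewrite (inj_eq lam_inj).
pose P := \matrix_(i, j) u i 0 j.
have rP i : row i P = u i by apply/rowP => j; rewrite !mxE.
have PPt : P *m P^T = 1%:M.
  apply/matrixP => i j; rewrite mulmx_tr_dot !rP mxE.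
  by case: (eqVneq i j) => [->|ij]; rewrite ?eqxx ?uu // uij.
have PtP := mulmx1C PPt.
exists (P, \row_i lam i); split => //=.
have PA : P *m A = diag_mx (\row_i lam i) *m P.
  apply/row_matrixP => i; rewrite !row_mul rP hu row_diag_mx mxE -scalemxAl -rowE rP.
  by [].
by rewrite -mulmxA -PA mulmxA PtP mul1mx.
Qed.

End Spec.

Section Poly.
Variables (R : realType) (n : nat) (c : 'I_n -> R).
Implicit Types (A P Q : 'M[R]_n).

Definition pr (x : R) := \sum_(k < n) c k * x ^+ k.
Definition pp A := \sum_(k < n) c k *: A ^+ k.

Lemma pow_conj Q A k : orth2 Q -> (Q^T *m A *m Q) ^+ k = Q^T *m A ^+ k *m Q.
Proof.
move=> [H1 H2]; elim: k => [|k IH]; first by rewrite !expr0 mulmx1.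
by rewrite !exprS -!mulmxE IH -!mulmxA (mulmxA Q) H2 mul1mx.
Qed.

Lemma pp_conj Q A : orth2 Q -> pp (Q^T *m A *m Q) = Q^T *m pp A *m Q.
Proof.
move=> oQ; rewrite /pp mulmx_sumr mulmx_suml; apply: eq_bigr => k _.
by rewrite pow_conj // -scalemxAr -scalemxAl.
Qed.

Lemma pow_diag (d : 'rV[R]_n) k : (diag_mx d) ^+ k = diag_mx (\row_j d 0 j ^+ k).
Proof.
elim: k => [|k IH].
  rewrite expr0; apply/matrixP => i j; rewrite !mxE.
  by case: (i == j).
by rewrite exprS -mulmxE IH mulmx_diag; congr diag_mx; apply/rowP => j; rewrite !mxE exprS.
Qed.

Lemma pp_diag (d : 'rV[R]_n) : pp (diag_mx d) = diag_mx (\row_j pr (d 0 j)).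
Proof.
apply/matrixP => i j; rewrite /pp summxE.
under eq_bigr do rewrite pow_diag.
rewrite !mxE; case: (eqVneq i j) => [->|ij].
  by rewrite mulr1n; apply: eq_bigr => k _; rewrite !mxE eqxx mulr1n.
by rewrite mulr0n big1 // => k _; rewrite !mxE (negbTE ij) mulr0n mulr0.
Qed.

Lemma pow_comm A k : A *m A ^+ k = A ^+ k *m A.
Proof. by rewrite mulmxE -exprS exprSr. Qed.

Lemma pp_comm A : A *m pp A = pp A *m A.
Proof.
rewrite /pp mulmx_sumr mulmx_suml; apply: eq_bigr => k _.
by rewrite -scalemxAr -scalemxAl pow_comm.
Qed.

Lemma pp_sym A : A^T = A -> (pp A)^T = pp A.
Proof.
move=> sA.
have hk k : (A ^+ k)^T = A ^+ k.
  elim: k => [|k IH]; first by rewrite expr0 trmx1.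
  by rewrite exprS -mulmxE trmx_mul IH sA -pow_comm.
apply/matrixP => i j; rewrite mxE !summxE; apply: eq_bigr => k _.
by rewrite !mxE -[in LHS](hk k) mxE.
Qed.

Lemma pp_od A P (d : 'rV[R]_n) : orth_diag A (P, d) ->
  pp A = P^T *m diag_mx (\row_j pr (d 0 j)) *m P.
Proof. by move=> [/orth2P oP /= ->]; rewrite pp_conj // pp_diag. Qed.

End Poly.

Section Funcalc.
Variables (R : realType) (n : nat) (lam : 'I_n -> R) (f : R -> R) (c : 'I_n -> R).
Hypothesis lam_inj : injective lam.
Hypothesis hc : forall i, pr c (lam i) = f (lam i).
Implicit Types (A P Q : 'M[R]_n).

Lemma od_pr A P d : inS lam A -> orth_diag A (P, d) -> forall j, pr c (d 0 j) = f (d 0 j).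
Proof.
move=> [_ eA] od j; have /eA [i ->] := od_eig od j; exact: hc.
Qed.

Lemma funcalc_pp A : inS lam A -> funcalc f A = pp c A.
Proof.
move=> hA.
have := @epsilon_spec _ (inhabits (1%:M, 0)) (orth_diag A) (spec_exists lam_inj hA).
rewrite /funcalc /=; case: (epsilon _ _) => P d /= od.
rewrite (pp_od c od); congr (_ *m _ *m _); congr diag_mx; apply/rowP => j.
by rewrite !mxE (od_pr hA od).
Qed.

Lemma pp_unit A : inS lam A -> (forall i, f (lam i) != 0) -> pp c A \in unitmx.
Proof.
move=> hA f0; have [[P d] od] := spec_exists lam_inj hA.
rewrite (pp_od c od); have [H1 _] := od.
have [uPt uP] := mulmx1_unit H1.
rewrite !unitmx_mul uPt uP andbT unitmxE det_diag unitfE; apply/prodf_neq0 => j _.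
rewrite mxE (od_pr hA od); have [_ eA] := hA.
by have /eA [i ->] := od_eig od j.
Qed.

End Funcalc.

Lemma interp (R : realType) n (lam : 'I_n -> R) (f : R -> R) : injective lam ->
  exists c : 'I_n -> R, forall i, pr c (lam i) = f (lam i).
Proof.
move=> li.
pose V : 'M[R]_n := Vandermonde n (\row_j lam j).
have Vu : V \in unitmx.
  rewrite unitmxE det_Vandermonde unitfE; apply/prodf_neq0 => i _.
  apply/prodf_neq0 => j ij; rewrite !mxE subr_eq0 (inj_eq li) eq_sym.
  by rewrite -val_eqE /= neq_ltn ij.
pose fv : 'rV[R]_n := \row_i f (lam i).
pose cr := fv *m invmx V.
exists (fun k => cr 0 k) => i.
have : (cr *m V) 0 i = fv 0 i by rewrite /cr mulmxKV.
rewrite !mxE => <-; apply: eq_bigr => k _; by rewrite !mxE.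
Qed.

Section Gap.
Variables (R : realType) (n : nat).
Definition Phi (M : 'M[R]_n) := \sum_(k < n) (k : nat)%:R * M k k.
Definition off (M : 'M[R]_n) :=
  \sum_(k < n) \sum_(j < n) (if k == j then 0 else M k j ^+ 2).

Lemma off_ge0 M : 0 <= off M.
Proof.
by apply: sumr_ge0 => k _; apply: sumr_ge0 => j _; case: ifP => _; rewrite ?sqr_ge0.
Qed.

Lemma off_eq0 M : off M = 0 -> forall k j, k != j -> M k j = 0.
Proof.
move=> h k j kj.
have g0 : forall k j, 0 <= (if k == j then 0 else M k j ^+ 2).
  by move=> k' j'; case: ifP => _; rewrite ?sqr_ge0.
have h1 := @psumr_eq0P _ _ _ _ (fun k _ => sumr_ge0 _ (fun j _ => g0 k j)) h k isT.
have := @psumr_eq0P _ _ _ _ (fun j _ => g0 k j) h1 j isT.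
by rewrite (negbTE kj) => /eqP; rewrite sqrf_eq0 => /eqP.
Qed.

Lemma gap_ineq (M : 'M[R]_n) : (forall i j : 'I_n, (j < i)%N -> M i j = 0) ->
  Phi (M *m M^T) + off M <= Phi (M^T *m M).
Proof.
move=> hM.
have e1 : Phi (M^T *m M) = \sum_(k < n) \sum_(j < n) (j : nat)%:R * M k j ^+ 2.
  rewrite /Phi; under eq_bigr do rewrite mxE mulr_sumr.
  rewrite exchange_big; apply: eq_bigr => k _; apply: eq_bigr => j _.
  by rewrite !mxE expr2.
have e2 : Phi (M *m M^T) = \sum_(k < n) \sum_(j < n) (k : nat)%:R * M k j ^+ 2.
  rewrite /Phi; apply: eq_bigr => k _; rewrite mxE mulr_sumr.
  by apply: eq_bigr => j _; rewrite !mxE expr2.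
rewrite e1 e2 /off -big_split /=; apply: ler_sum => k _; rewrite -big_split.
apply: ler_sum => j _ /=.
case: (ltngtP j k) => [jk|kj|jk].
- by rewrite hM // expr2 !mulr0 if_same addr0.
- have -> : (k == j) = false by apply/negbTE; rewrite -val_eqE /= neq_ltn kj.
  rewrite -[X in _ + X]mul1r -mulrDl; apply: ler_wpM2r; first exact: sqr_ge0.
  by rewrite -[1]/(1%:R) -natrD ler_nat addn1.
- have -> : k = j by apply: val_inj.
  by rewrite eqxx addr0 jk.
Qed.

End Gap.

Lemma eig_diag (R : realType) n (e : 'rV[R]_n) a :
  eigenvalue (diag_mx e) a <-> exists j, a = e 0 j.
Proof.
split.
  move=> /eigenvalueP [v hv v0].
  have /existsP [j vj] : [exists j, v 0 j != 0].
    apply: contraR v0 => /existsPn h; apply/eqP/rowP => j; rewrite mxE.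
    by apply/eqP; have := h j; rewrite negbK.
  exists j; have := congr1 (fun M : 'M[R]_(1, n) => M 0 j) hv; rewrite mul_mx_diag !mxE.
  by rewrite mulrC => /mulIf -> //.
move=> [j ->]; apply/eigenvalueP; exists ('e_j).
  by rewrite -rowE row_diag_mx.
apply/negP => /eqP /rowP /(_ j); rewrite !mxE !eqxx /= => /eqP.
by rewrite oner_eq0.
Qed.

Section Dyn.
Variables (R : realType) (n : nat) (lam : 'I_n -> R) (f : R -> R) (c : 'I_n -> R).
Hypothesis lam_inj : injective lam.
Hypothesis hc : forall i, pr c (lam i) = f (lam i).
Hypothesis f0 : forall i, f (lam i) != 0.
Hypothesis fabs : forall i j : 'I_n, i != j -> `|f (lam i)| != `|f (lam j)|.
Implicit Types (A P Q T : 'M[R]_n).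

Definition W T := Phi (pp c T *m pp c T).

Lemma qr_spec T : inS lam T -> orthogonal_mx (qrQ (pp c T)) /\
  exists Rm, upper_pos_mx Rm /\ pp c T = qrQ (pp c T) *m Rm.
Proof.
move=> hT; have Au : pp c T \in unitmx by apply: (pp_unit lam_inj hc).
exact: (epsilon_spec _ _ (qr_exists Au)).
Qed.

Lemma QRstepE T : inS lam T ->
  QRstep f T = (qrQ (pp c T))^T *m T *m qrQ (pp c T).
Proof. by move=> hT; rewrite /QRstep (funcalc_pp lam_inj hc). Qed.

Lemma step T : inS lam T ->
  [/\ inS lam (QRstep f T), orthogonal_mx (qrQ (pp c T)) &
      W (QRstep f T) + off ((qrQ (pp c T))^T *m pp c T) <= W T].
Proof.
move=> hT; have [oQ [Rm [[up _] AE]]] := qr_spec hT.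
set Q := qrQ (pp c T) in oQ AE *.
have o2 := orth2P oQ; have [H1 H2] := o2.
have hT' : inS lam (QRstep f T) by rewrite QRstepE //; apply: inS_conj.
split => //.
set A := pp c T in AE *.
have RmE : Q^T *m A = Rm by rewrite AE mulmxA H1 mul1mx.
have sA : A^T = A := pp_sym c hT.1.
have e1 : A *m A = Rm^T *m Rm.
  by rewrite -RmE trmx_mul trmxK -mulmxA (mulmxA Q) H2 mul1mx sA.
have e2 : pp c (QRstep f T) *m pp c (QRstep f T) = Rm *m Rm^T.
  rewrite QRstepE // pp_conj // -/Q -/A RmE.
  have sRQ : (Rm *m Q)^T = Rm *m Q.
    by rewrite -RmE !trmx_mul trmxK sA mulmxA.
  by rewrite -{2}sRQ trmx_mul mulmxA -(mulmxA Rm) H2 mulmx1.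
rewrite /W e2 -/A e1 RmE; exact: gap_ineq up.
Qed.

Lemma AA_od T P d : orth_diag T (P, d) ->
  pp c T *m pp c T = P^T *m diag_mx (\row_j (pr c (d 0 j)) ^+ 2) *m P.
Proof.
move=> od; rewrite (pp_od c od); have [/orth2P [H1 H2] _] := od.
rewrite -!mulmxA (mulmxA P) H2 mul1mx (mulmxA (diag_mx _)) mulmx_diag mulmxA.
by rewrite mulmxA; congr (_ *m diag_mx _ *m _); apply/rowP => j; rewrite !mxE expr2.
Qed.

Lemma AAkk_ge0 T k : inS lam T -> 0 <= (pp c T *m pp c T) k k.
Proof.
move=> hT; rewrite -{2}(pp_sym c hT.1) mulmx_tr_dot; exact: dot_ge0.
Qed.

Lemma W_ge0 T : inS lam T -> 0 <= W T.
Proof.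
move=> hT; apply: sumr_ge0 => k _; apply: mulr_ge0; first exact: ler0n.
exact: AAkk_ge0.
Qed.

Definition Mx := \sum_i f (lam i) ^+ 2.

Lemma W_le T : inS lam T -> W T <= n%:R * (n%:R * Mx).
Proof.
move=> hT; have [[P d] od] := spec_exists lam_inj hT.
have [_ eA] := hT.
have trE : \tr (pp c T *m pp c T) = \sum_j (pr c (d 0 j)) ^+ 2.
  rewrite (AA_od od) mxtrace_mulC mulmxA; have [/orth2P [H1 H2] _] := od.
  rewrite /= in H1 H2.
  by rewrite H2 mul1mx mxtrace_diag; apply: eq_bigr => j _; rewrite mxE.
apply: (@le_trans _ _ (n%:R * \tr (pp c T *m pp c T))).
  rewrite /W /Phi mulr_sumr; apply: ler_sum => k _; apply: ler_wpM2r.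
    exact: AAkk_ge0.
  by rewrite ler_nat ltnW.
apply: ler_wpM2l; first exact: ler0n.
rewrite trE; apply: (@le_trans _ _ (\sum_(j < n) Mx)); last first.
  by rewrite sumr_const card_ord mulr_natl.
apply: ler_sum => j _; rewrite (od_pr hc hT od).
have /eA [i ->] := od_eig od j.
rewrite /Mx (bigD1 i) //= lerDl; apply: sumr_ge0 => l _; exact: sqr_ge0.
Qed.

Lemma off_pos T Q : inS lam T -> orthogonal_mx Q -> off (Q^T *m pp c T) = 0 ->
  is_diag_mx T.
Proof.
move=> hT oQ h0; have [H1 H2] := orth2P oQ.
have sA := pp_sym c hT.1.
set A := pp c T in sA h0 *.
set D := Q^T *m A in h0.
have Dd := off_eq0 h0.
pose dd := \row_j D j j.
have DE : D = diag_mx dd.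
  apply/matrixP => i j; rewrite [RHS]mxE [dd 0 i]mxE; case: eqVneq => [->|ij]; first by rewrite mulr1n.
  by rewrite Dd // mulr0n.
have AE : A = Q *m D by rewrite /D mulmxA H2 mul1mx.
pose e := \row_j (dd 0 j ^+ 2).
have AAe : A *m A = diag_mx e.
  rewrite -{1}sA AE trmx_mul -mulmxA (mulmxA Q^T) H1 mul1mx DE tr_diag_mx mulmx_diag.
  by congr diag_mx; apply/rowP => j; rewrite !mxE expr2.
have comm : T *m (A *m A) = (A *m A) *m T.
  by rewrite mulmxA pp_comm -mulmxA pp_comm mulmxA.
have [[P d] od] := spec_exists lam_inj hT.
have [_ eA] := hT.
have [/orth2P oP TE] := od.
rewrite /= in oP TE.
pose g := \row_j (pr c (d 0 j)) ^+ 2.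
have eg : forall a, eigenvalue (diag_mx e) a <-> eigenvalue (diag_mx g) a.
  move=> a; rewrite -AAe (AA_od od); exact: eig_conj.
have hin : forall i, exists k, f (lam i) ^+ 2 = e 0 k.
  move=> i; apply/eig_diag; apply/eg.
  have : eigenvalue T (lam i) by apply/eA; exists i.
  rewrite /= in TE; rewrite TE => /(eig_conj _ _ oP) /eig_diag [j dj].
  apply/eig_diag; exists j; rewrite mxE (od_pr hc hT od) -dj.
  by [].
have hinj : injective (fun i => f (lam i) ^+ 2).
  move=> i j /= hij; apply/eqP; apply: contraT => ij.
  by have := fabs ij; rewrite -!sqrtr_sqr hij eqxx.
have edist : forall i j, i != j -> e 0 i != e 0 j.
  move=> i j ij; apply/negP => /eqP eij.
  have n0 : (0 < n)%N by apply: (leq_ltn_trans _ (ltn_ord i)).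
  have := @uniq_leq_size _ (map (fun i => f (lam i) ^+ 2) (enum 'I_n))
     (map (fun k => e 0 k) (rem j (enum 'I_n))).
  rewrite map_inj_uniq // enum_uniq !size_map size_rem ?mem_enum // size_enum_ord.
  move=> H.
  have sub : {subset [seq f (lam i0) ^+ 2 | i0 <- enum 'I_n] <= [seq e 0 k | k <- rem j (enum 'I_n)]}.
    move=> x /mapP [i' _ ->]; have [k hk] := hin i'; rewrite hk.
    case: (eqVneq k j) => [kj|kj].
      rewrite kj -eij; apply/mapP; exists i => //.
      by rewrite (mem_rem_uniq _ (enum_uniq _)) /= inE ij mem_enum.
    apply/mapP; exists k => //.
    by rewrite (mem_rem_uniq _ (enum_uniq _)) /= inE kj mem_enum.
  by have := H isT sub; rewrite -enumT size_enum_ord leqNgt ltn_predL n0.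
apply/is_diag_mxP => i j ij.
have ij' : i != j by rewrite -val_eqE.
have := congr1 (fun M : 'M[R]_n => M i j) comm; rewrite AAe mul_mx_diag mul_diag_mx [X in X = _]mxE [X in _ = X]mxE.
move=> /eqP; rewrite mulrC -subr_eq0 -mulrBl mulf_eq0 subr_eq0.
have ji' : j != i by rewrite eq_sym.
by rewrite ?(negbTE (edist _ _ ij')) ?(negbTE (edist _ _ ji')) ?orbF => /eqP.
Qed.

End Dyn.
Local Open Scope classical_set_scope.

Lemma mx_cont (Y : topologicalType) (R : realType) a b (g : Y -> 'M[R]_(a, b)) :
  (forall i j, continuous (fun y => g y i j)) -> continuous g.
Proof.
move=> hg y A /= [P nP sPA].
have : \forall z \near y, forall ij : 'I_a * 'I_b, P ij.1 ij.2 (g z ij.1 ij.2).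
  apply: filter_forall => -[i j] /=; exact: hg (nP i j).
by apply: filterS => z hz; apply: sPA => i j; exact: (hz (i, j)).
Qed.

Section Cont.
Variables (R : realType) (Y : topologicalType).

Definition cmx a b (g : Y -> 'M[R]_(a, b)) := forall i j, continuous (fun y => g y i j).

Lemma cont_sum (I : finType) (F : I -> Y -> R) :
  (forall i, continuous (F i)) -> continuous (fun y => \sum_i F i y).
Proof.
move=> hF.
suff H : forall s : seq I, continuous (fun y => \sum_(i <- s) F i y) by apply: H.
elim=> [|i s IH].
  have -> : (fun y => \sum_(i <- [::]) F i y) = fun=> 0 by apply/funext => y; rewrite big_nil.
  exact: cst_continuous.
have -> : (fun y => \sum_(j <- i :: s) F j y) = (F i + (fun y => \sum_(j <- s) F j y)).
  by apply/funext => y; rewrite big_cons.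
by move=> y; apply: continuousD; [exact: hF | exact: IH].
Qed.

Lemma cont_mul (s t : Y -> R) : continuous s -> continuous t ->
  continuous (fun y => s y * t y).
Proof. by move=> hs ht y; apply: continuousM; [exact: hs | exact: ht]. Qed.

Lemma cmx_mul a b d (g : Y -> 'M[R]_(a, b)) (h : Y -> 'M[R]_(b, d)) :
  cmx g -> cmx h -> cmx (fun y => g y *m h y).
Proof.
move=> hg hh i j.
have -> : (fun y => (g y *m h y) i j) = (fun y => \sum_k g y i k * h y k j).
  by apply/funext => y; rewrite mxE.
by apply: cont_sum => k; apply: cont_mul.
Qed.

Lemma cmx_tr a b (g : Y -> 'M[R]_(a, b)) : cmx g -> cmx (fun y => (g y)^T).
Proof.
move=> hg i j.
have -> : (fun y => (g y)^T i j) = (fun y => g y j i) by apply/funext => y; rewrite mxE.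
exact: hg.
Qed.

Lemma cmx_const a b (M : 'M[R]_(a, b)) : cmx (fun _ => M).
Proof. by move=> i j; exact: cst_continuous. Qed.

Lemma cmx_scale a b (k : R) (g : Y -> 'M[R]_(a, b)) : cmx g -> cmx (fun y => k *: g y).
Proof.
move=> hg i j.
have -> : (fun y => (k *: g y) i j) = (fun y => k * g y i j) by apply/funext => y; rewrite mxE.
by apply: cont_mul => //; exact: cst_continuous.
Qed.

Lemma cmx_sum a b (I : finType) (G : I -> Y -> 'M[R]_(a, b)) :
  (forall k, cmx (G k)) -> cmx (fun y => \sum_k G k y).
Proof.
move=> hG i j.
have -> : (fun y => (\sum_k G k y) i j) = (fun y => \sum_k G k y i j).
  by apply/funext => y; rewrite summxE.
by apply: cont_sum => k; apply: hG.
Qed.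

Lemma cmx_pow m (g : Y -> 'M[R]_m) k : cmx g -> cmx (fun y => g y ^+ k).
Proof.
move=> hg; elim: k => [|k IH].
  have -> : (fun y => g y ^+ 0) = fun=> 1 by apply/funext => y; rewrite expr0.
  exact: cmx_const.
have -> : (fun y => g y ^+ k.+1) = (fun y => g y *m g y ^+ k).
  by apply/funext => y; rewrite exprS mulmxE.
exact: cmx_mul.
Qed.

Lemma cmx_pp m (c : 'I_m -> R) (g : Y -> 'M[R]_m) : cmx g -> cmx (fun y => pp c (g y)).
Proof.
move=> hg; rewrite /pp; apply: cmx_sum => k; apply: cmx_scale; exact: cmx_pow.
Qed.

Lemma cont_off m (g : Y -> 'M[R]_m) : cmx g -> continuous (fun y => off (g y)).
Proof.
move=> hg; rewrite /off; apply: cont_sum => k; apply: cont_sum => j.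
case: (k == j); first exact: cst_continuous.
have -> : (fun y => g y k j ^+ 2) = (fun y => g y k j * g y k j).
  by apply/funext => y; rewrite expr2.
by apply: cont_mul; apply: hg.
Qed.

End Cont.

Lemma cmx_fst (R : realType) a b c d :
  cmx (fun y : 'M[R]_(a, b) * 'M[R]_(c, d) => y.1).
Proof.
move=> i j y; apply: (@continuous_comp _ _ _ fst (fun M : 'M[R]_(a, b) => M i j)).
  exact: cvg_fst.
exact: coord_continuous.
Qed.

Lemma cmx_snd (R : realType) a b c d :
  cmx (fun y : 'M[R]_(a, b) * 'M[R]_(c, d) => y.2).
Proof.
move=> i j y; apply: (@continuous_comp _ _ _ snd (fun M : 'M[R]_(c, d) => M i j)).
  exact: cvg_snd.
exact: coord_continuous.
Qed.

Lemma orth_compact (R : realType) n : compact [set Q : 'M[R]_n | Q^T *m Q = 1%:M].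
Proof.
pose Box := [set v : 'rV[R]_(n * n) | forall i, (`[-1, 1]%classic : set R) (v ord0 i)].
have cB : compact Box.
  exact: (@rV_compact R (n * n) (fun _ => `[(-1 : R), 1]%classic) (fun _ => @segment_compact R (-1) 1)).
have hv : cmx (@vec_mx R n n).
  move=> i j.
  have -> : (fun v : 'rV[R]_(n * n) => vec_mx v i j) = (fun v => v 0 (mxvec_index i j)).
    by apply/funext => v; rewrite mxE.
  exact: coord_continuous.
have cv := mx_cont hv.
have clC : closed [set v : 'rV[R]_(n * n) | (vec_mx v)^T *m vec_mx v = 1%:M].
  have hg := mx_cont (cmx_mul (cmx_tr hv) hv).
  have c1 : closed [set (1%:M : 'M[R]_n)].
    apply: compact_closed; [exact: norm_hausdorff | exact: compact_set1].
  exact: ((continuous_closedP _).1 hg _ c1).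
have cC := compact_closedI cB clC.
have := continuous_compact (continuous_subspaceT cv) cC.
congr compact; apply/seteqP; split.
  by move=> Q [v [_ hQ] <-].
move=> Q /= hQ; exists (mxvec Q); last exact: mxvecK.
split; last by rewrite /= mxvecK.
move=> k; case/mxvec_indexP: k => i j; rewrite mxvecE /= in_itv /=.
have e : \sum_l Q l j ^+ 2 = 1.
  have := congr1 (fun M : 'M[R]_n => M j j) hQ; rewrite [RHS]mxE eqxx mulr1n => <-.
  by rewrite mxE; apply: eq_bigr => l _; rewrite mxE expr2.
have h : Q i j ^+ 2 <= 1.
  rewrite -e (bigD1 i) //= lerDl; apply: sumr_ge0 => l _; exact: sqr_ge0.
by apply/andP; split; nra.
Qed.

Lemma TL_inS (R : realType) n (lam : 'I_n -> R) A : TLambda lam A -> inS lam A.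
Proof. by case=> sA [_ eA]; split. Qed.

Lemma delta_exists (R : realType) n (lam : 'I_n -> R) (f : R -> R) (c : 'I_n -> R)
  (Kset : set 'M[R]_n) :
  injective lam -> (forall i, pr c (lam i) = f (lam i)) ->
  (forall i j : 'I_n, i != j -> `|f (lam i)| != `|f (lam j)|) ->
  compact Kset -> (forall A, Kset A -> TLambda lam A) ->
  (forall A, Kset A -> ~~ is_diag_mx A) ->
  exists d : R, 0 < d /\ forall T Q, Kset T -> orthogonal_mx Q -> d <= off (Q^T *m pp c T).
Proof.
move=> li hc fabs cK KT Kd.
case: (pselect (Kset !=set0)) => [[T0 KT0]|K0]; last first.
  by exists 1; split => // T Q KTT; exfalso; apply: K0; exists T.
pose X := Kset `*` [set Q : 'M[R]_n | Q^T *m Q = 1%:M].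
have X0 : X !=set0 by exists (T0, 1%:M); split => //=; rewrite trmx1 mul1mx.
have cX : compact X := compact_setX cK (@orth_compact R n).
pose G := fun y : 'M[R]_n * 'M[R]_n => off ((y.2)^T *m pp c y.1).
have cG : continuous G.
  rewrite /G; apply: cont_off; apply: cmx_mul.
    by apply: cmx_tr; exact: cmx_snd.
  by apply: cmx_pp; exact: cmx_fst.
have [m mX hm] := compact_EVT_min X0 cX (continuous_subspaceT cG).
have [KTm oQ] : X m by rewrite inE in mX.
exists (G m); split.
  rewrite lt_def off_ge0 andbT; apply/negP => /eqP G0.
  have hT := TL_inS (KT _ KTm).
  by have := off_pos li hc fabs hT oQ G0; apply/negP; apply: Kd.
move=> T Q KTT oQ'; apply: (hm (T, Q)); rewrite inE; by split.
Qed.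

Local Close Scope classical_set_scope.
Unset Implicit Arguments.

Theorem corollary2p8 (R : realType) (n : nat) (lam : 'I_n -> R) (f : R -> R)
  (Kset : set 'M[R]_n) :
  (forall i j : 'I_n, (i < j)%N -> lam i < lam j) ->
  (forall i : 'I_n, f (lam i) != 0) ->
  (forall i j : 'I_n, i != j -> `|f (lam i)| != `|f (lam j)|) ->
  compact Kset ->
  (forall A, Kset A -> TLambda lam A) ->
  (forall A, Kset A -> ~~ is_diag_mx A) ->
  exists K : nat, (0 < K)%N /\
    forall T, TLambda lam T ->
      forall s : seq nat, uniq s ->
        (forall k, k \in s -> Kset (iter k (QRstep f) T)) ->
        (size s < K)%N.
Proof.
move=> lam_lt f0 fabs cK KT Kd.
have li : injective lam.
  move=> i j e; apply/eqP; case: (ltngtP i j) => [ij|ji|ij].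
  - by have := lam_lt _ _ ij; rewrite e ltxx.
  - by have := lam_lt _ _ ji; rewrite e ltxx.
  - by rewrite -val_eqE /= ij.
have [c hc] := interp f li.
have [d [d0 hd]] := delta_exists li hc fabs cK KT Kd.
pose Bd := n%:R * (n%:R * Mx lam f).
have Bd0 : 0 <= Bd.
  by rewrite /Bd !mulr_ge0 ?ler0n //; apply: sumr_ge0 => i _; exact: sqr_ge0.
have Bdd : 0 <= Bd / d by rewrite divr_ge0 // ltW.
pose N := Num.Def.archi_bound (Bd / d).
have hN : Bd / d < N%:R := archi_boundP Bdd.
exists N; split.
  by rewrite -(ltr_nat R); apply: le_lt_trans hN.
move=> T hT s us hs.
have inT := TL_inS hT.
pose Tk k := iter k (QRstep f) T.
have inK : forall k, inS lam (Tk k).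
  elim => [|k IH] //=; by have [h _ _] := step li hc f0 IH.
pose cnt m := count (fun k => `[< Kset (Tk k) >]) (iota 0 m).
have key : forall m, W c (Tk m) + d * (cnt m)%:R <= W c T.
  elim=> [|m IH]; first by rewrite /cnt /= mulr0 addr0.
  have -> : cnt m.+1 = (cnt m + `[< Kset (Tk m) >])%N.
    by rewrite /cnt -addn1 iotaD count_cat /= addn0.
  have [_ oQ hst] := step li hc f0 (inK m).
  have o0 := off_ge0 ((qrQ (pp c (Tk m)))^T *m pp c (Tk m)).
  rewrite natrD mulrDr addrA.
  have e : Tk m.+1 = QRstep f (Tk m) by [].
  rewrite e.
  case: asboolP => [Kin|_] /=.
    have := hd _ _ Kin oQ; lra.
  lra.
pose m := (\sum_(k <- s) k).+1.
have sub : {subset s <= [seq k <- iota 0 m | `[< Kset (Tk k) >]]}.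
  move=> k ks; rewrite mem_filter mem_iota /= add0n; apply/andP; split.
    by apply/asboolP; exact: hs.
  by rewrite ltnS (bigD1_seq k) //= leq_addr.
have hsz := uniq_leq_size us sub; rewrite size_filter -/(cnt m) in hsz.
have c1 : (size s)%:R <= (cnt m)%:R :> R by rewrite ler_nat.
have c2 : d * (size s)%:R <= d * (cnt m)%:R by rewrite ler_pM2l.
have w1 := W_ge0 c (inK m).
have w2 := W_le li hc inT.
have k1 := key m.
rewrite -(ltr_nat R); apply: le_lt_trans hN.
rewrite ler_pdivlMr //.
rewrite -/Bd in w2.
lra.
Qed.
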